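(* Let $\mathbbm{k}$ be an algebraically closed field of characteristic $0$, and let $\mathscr{A}_2$ be the connected cochain DG algebra whose underlying graded algebra is the free algebra $\mathbbm{k}\langle y_1,y_2,y_3\rangle$ with $|y_1|=|y_2|=|y_3|=1$, and whose differential is determined by $\partial(y_1)=y_3^2$, $\partial(y_2)=y_1y_3+y_3y_1$, $\partial(y_3)=0$ (extended by the graded Leibniz rule). Then $$H(\mathscr{A}_2)=\frac{\mathbbm{k}[\lceil y_3\rceil,\lceil y_1^2+y_2y_3+y_3y_2\rceil]}{(\lceil y_3\rceil^2 )},$$ i.e. the cohomology ring is the commutative algebra generated by $\lceil y_3\rceil$ (degree $1$) and $\lceil y_1^2+y_2y_3+y_3y_2\rceil$ (degree $2$) subject only to $\lceil y_3\rceil^2=0$.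
   Context: A cochain DG algebra is a $\mathbb{Z}$-graded algebra with a degree $1$ differential $\partial$ satisfying $\partial^2=0$ and $\partial(ab)=\partial(a)b+(-1)^{|a|}a\partial(b)$. For a cocycle $z$, $\lceil z\rceil$ denotes its cohomology class. *)

(* Defs.v *)
From mathcomp Require Import all_boot all_algebra.
Set Implicit Arguments. Unset Strict Implicit. Unset Printing Implicit Defensive.
Import GRing.Theory.
Local Open Scope ring_scope.

(* Words in the three letters y_1, y_2, y_3 (encoded as 0, 1, 2 : 'I_3). *)
Definition word := seq 'I_3.

(* Noncommutative formal series k<<y1,y2,y3>>: coefficient function on words.
   The free algebra k<y1,y2,y3> (all y_i of degree 1) is the direct sum of its
   homogeneous components; a homogeneous element of degree n is exactly a
   series supported on words of length n (finitely many words). *)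
Definition series (K : fieldType) := word -> K.

Section FreeAlg.
Variable K : fieldType.

Definition homog (n : nat) (f : series K) : Prop :=
  forall w : word, size w <> n -> f w = 0.

Definition sadd (f g : series K) : series K := fun w => f w + g w.
Definition ssub (f g : series K) : series K := fun w => f w - g w.
Definition sscale (c : K) (f : series K) : series K := fun w => c * f w.
Definition szero : series K := fun _ => 0.
Definition sone : series K := fun w => (w == [::])%:R.
Definition smul (f g : series K) : series K :=
  fun w => \sum_(i < (size w).+1) f (take i w) * g (drop i w).
Definition spow (f : series K) (m : nat) : series K := iter m (smul f) sone.
Definition gen (k : 'I_3) : series K := fun w => (w == [:: k])%:R.

(* The unique derivation of degree 1 with the graded Leibniz rule
   d(ab) = d(a) b + (-1)^|a| a d(b) (all generators of degree 1) and
   d(y_k) = dy k.  On a word u y_k t it gives (-1)^|u| u (dy k) t;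
   below is the coefficient of the word w = u v t in d(f). *)
Definition der (dy : 'I_3 -> series K) (f : series K) : series K :=
  fun w => \sum_(i < (size w).+1) \sum_(j < (size w).+1 | (i <= j)%N)
             \sum_(k < 3)
               (-1) ^+ i * dy k (drop i (take j w)) * f (take i w ++ k :: drop j w).

Definition y1 : series K := gen 0.
Definition y2 : series K := gen 1.
Definition y3 : series K := gen 2.

Definition A2_dgen (k : 'I_3) : series K :=
  match nat_of_ord k with
  | 0%N => smul y3 y3
  | 1%N => sadd (smul y1 y3) (smul y3 y1)
  | _ => szero
  end.

Definition dA2 : series K -> series K := der A2_dgen.

Definition cocycle (n : nat) (f : series K) : Prop :=
  homog n f /\ forall w, dA2 f w = 0.
Definition coboundary (n : nat) (f : series K) : Prop :=
  exists g : series K, homog n.-1 g /\ forall w, f w = dA2 g w.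
Definition cohomologous (n : nat) (f g : series K) : Prop :=
  coboundary n (ssub f g).

Definition zA2 : series K := sadd (smul y1 y1) (sadd (smul y2 y3) (smul y3 y2)).

(* image in A_2 of the monomial of degree n of k[a,b]/(a^2):
   b^(n/2) if n even, a b^((n-1)/2) if n odd, with a |-> y3, b |-> z *)
Definition monA2 (n : nat) : series K :=
  if odd n then smul y3 (spow zA2 n./2) else spow zA2 n./2.

End FreeAlg.

(* Main.v *)
Require Import Defs.
From mathcomp Require Import all_boot all_algebra.
From mathcomp Require Import ring.
Set Implicit Arguments. Unset Strict Implicit. Unset Printing Implicit Defensive.
Import GRing.Theory.
Local Open Scope ring_scope.

Definition o0 : 'I_3 := @Ordinal 3 0 isT.
Definition o1 : 'I_3 := @Ordinal 3 1 isT.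
Definition o2 : 'I_3 := @Ordinal 3 2 isT.
Lemma o2E : (2 : 'I_3) = o2. Proof. by apply/val_inj. Qed.
Lemma o1E : (1 : 'I_3) = o1. Proof. by apply/val_inj. Qed.
Lemma o0E : (0 : 'I_3) = o0. Proof. by apply/val_inj. Qed.


Section Work.
Variable K : fieldType.
Local Notation series := (series K).

Definition mg (a b : 'I_3) : option 'I_3 :=
  match nat_of_ord a, nat_of_ord b with
  | 2, 2 => Some o0 | 0, 2 => Some o1 | 2, 0 => Some o1 | _, _ => None end.
Definition mv (f : series) a b v : K := if mg a b is Some k then f (k :: v) else 0.
Fixpoint D (f : series) (w : word) {struct w} : K :=
  match w with
  | a :: ((b :: v) as w') => mv f a b v - D (fun u => f (a :: u)) w'
  | _ => 0 end.

Arguments D : simpl never.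
Lemma D2 f a b v : D f (a :: b :: v) = mv f a b v - D (fun u => f (a :: u)) (b :: v).
Proof. by []. Qed.
Lemma D_nil f : D f [::] = 0. Proof. by []. Qed.
Lemma D_1 f a : D f [:: a] = 0. Proof. by []. Qed.

Lemma D_eq f g w : (forall u, f u = g u) -> D f w = D g w.
Proof.
elim: w f g => [|a w IH] f g H //; case: w IH => [|b v] IH //.
rewrite !D2 (IH _ (fun u => g (a :: u))) //; by rewrite /mv; case: mg => // k; rewrite H.
Qed.

Lemma D_lin x y f g w : D (fun u => x * f u + y * g u) w = x * D f w + y * D g w.
Proof.
elim: w f g => [|a w IH] f g; first by rewrite !D_nil; ring.
case: w IH => [|b v] IH; first by rewrite !D_1; ring.
rewrite !D2 IH /mv; case: mg => [k|]; ring.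
Qed.

Lemma D0 w : D (fun _ => 0) w = 0.
Proof. by rewrite (@D_eq _ (fun u => 0 * (fun _ => 0) u + 0 * (fun _ => 0) u)) ?D_lin ?mul0r ?addr0 // => u; ring. Qed.

Lemma derE_cons (dy : 'I_3 -> series) f a w :
  der dy f (a :: w) = \sum_(j < (size w).+2) \sum_(k < 3) dy k (take j (a :: w)) * f (k :: drop j (a :: w))
                      - der dy (fun u => f (a :: u)) w.
Proof.
rewrite /der /= big_ord_recl /=; congr (_ + _).
  rewrite (eq_bigl xpredT) //; apply: eq_bigr => j _; apply: eq_bigr => k _.
  by rewrite expr0 mul1r drop0.
rewrite -sumrN; apply: eq_bigr => i _.
rewrite big_mkcond big_ord_recl /= add0r [in RHS]big_mkcond -sumrN; apply: eq_bigr => j _.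
rewrite /bump /= !add1n ltnS; case: ifP => _; last by rewrite oppr0.
rewrite -sumrN; apply: eq_bigr => k _.
rewrite exprS; ring.
Qed.

Lemma smul_homog k (f g : series) w : homog k f ->
  smul f g w = if (k <= size w)%N then f (take k w) * g (drop k w) else 0.
Proof.
move=> hf; rewrite /smul; case: leqP => Hk.
  have Hk' : (k < (size w).+1)%N by rewrite ltnS.
  rewrite (bigD1 (Ordinal Hk')) //= big1 ?addr0 //.
  move=> i Hi; rewrite hf ?mul0r // size_takel; last by rewrite -ltnS.
  by move=> E; move/eqP: Hi; apply; apply/val_inj.
apply: big1 => i _; rewrite hf ?mul0r // size_takel; last by rewrite -ltnS.
by move=> E; move: (ltn_ord i); rewrite E ltnS leqNgt Hk.
Qed.

Lemma gen_homog (a : 'I_3) : homog 1 (gen K a).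
Proof. by move=> w Hw; rewrite /gen; case: eqP => // E; rewrite E in Hw. Qed.

Lemma smul_gen (a b : 'I_3) w : smul (gen K a) (gen K b) w = (w == [:: a; b])%:R.
Proof.
rewrite (smul_homog _ _ (gen_homog a)); case: w => [|x u] //=.
by rewrite take0 drop0 /gen eqseq_cons andbT -natrM mulnb -eqseq_cons.
Qed.

Lemma dgen_homog k u : size u <> 2%N -> A2_dgen K k u = 0.
Proof.
move=> Hu; have N a b : (u == [:: a; b]) = false by apply/eqP => E; rewrite E in Hu.
rewrite /A2_dgen; case: k => -[|[|m]] Hm /=.
- by rewrite /y3 smul_gen N.
- by rewrite /sadd /y1 /y3 !smul_gen !N addr0.
- by [].
Qed.

Lemma dgen_mv (f : series) a b v : \sum_(k < 3) A2_dgen K k [:: a; b] * f (k :: v) = mv f a b v.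
Proof.
rewrite !big_ord_recl big_ord0.
have -> : (lift ord0 (lift ord0 ord0) : 'I_3) = o2 by apply/val_inj.
have -> : (lift ord0 ord0 : 'I_3) = o1 by apply/val_inj.
have -> : (ord0 : 'I_3) = o0 by apply/val_inj.
rewrite /A2_dgen /= /sadd /y1 /y2 /y3 !smul_gen /mv /mg ?o2E ?o1E ?o0E.
by case: a => -[|[|[|m]]] Ha; case: b => -[|[|[|n]]] Hb //=; rewrite /szero; ring.
Qed.

Lemma derE (f : series) w : dA2 f w = D f w.
Proof.
elim: w f => [|a w IH] f.
  by rewrite /dA2 /der /=; apply: big1 => i _; apply: big1 => j _; apply: big1 => k _; rewrite dgen_homog ?mulr0 ?mul0r.
rewrite /dA2 derE_cons -/(dA2 _) IH; case: w IH => [|b v] IH.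
  rewrite D_1 D_nil subr0 big1 // => j _; rewrite big1 // => k _.
  by rewrite dgen_homog ?mul0r // size_take /=; case: ifP => //; case: (val j) => [|[|]].
rewrite D2 /=; congr (_ - _).
rewrite big_ord_recl [in X in _ + X]big_ord_recl [in X in _ + (_ + X)]big_ord_recl /= !take0.
rewrite [in X in _ + (_ + (_ + X))]big1; last first.
  move=> j _; apply: big1 => k _; rewrite dgen_homog ?mul0r //.
  rewrite /= size_takel; last by rewrite add0n /bump add1n ltn_ord.
  by rewrite add0n /bump add1n.
rewrite big1 ?add0r; last by move=> k _; rewrite dgen_homog ?mul0r.
rewrite big1 ?add0r; last by move=> k _; rewrite dgen_homog ?mul0r.
by rewrite addr0 add0n drop0 dgen_mv.
Qed.

Lemma D_scale x f w : D (fun u => x * f u) w = x * D f w.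
Proof.
rewrite (@D_eq _ (fun u => x * f u + 0 * f u)) ?D_lin; first by ring.
by move=> u; ring.
Qed.

Lemma D_comb a1 a2 a3 f1 f2 f3 w :
  D (fun u => a1 * f1 u + a2 * f2 u + a3 * f3 u) w = a1 * D f1 w + a2 * D f2 w + a3 * D f3 w.
Proof.
rewrite (@D_eq _ (fun u => 1 * (fun u => a1 * f1 u + a2 * f2 u) u + a3 * f3 u)) ?D_lin ?D_lin.
  by ring.
by move=> u; ring.
Qed.

Lemma D_zero f w : (forall u, f u = 0) -> D f w = 0.
Proof. by move=> H; rewrite (@D_eq _ (fun _ => 0)) ?D0. Qed.

Lemma D_homog0 f w : homog 0 f -> D f w = 0.
Proof.
move=> hf; case: w => [|x [|y v]]; rewrite ?D_nil ?D_1 // D2 D_zero ?subr0.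
  by rewrite /mv; case: mg => // k; rewrite hf.
by move=> u; rewrite hf.
Qed.

Lemma D_homog m f w : homog m f -> size w <> m.+1 -> D f w = 0.
Proof.
elim: w m f => [|x w IH] m f hf Hs; first by rewrite D_nil.
case: w IH Hs => [|y v] IH Hs; first by rewrite D_1.
rewrite D2; case: m hf Hs => [|m] hf Hs.
  rewrite D_zero; last by move=> u; rewrite hf.
  by rewrite /mv; case: mg => [k|]; rewrite ?hf ?subr0.
rewrite (IH m) ?subr0.
- by rewrite /mv; case: mg => // k; rewrite hf //= => E; apply: Hs; rewrite /= E.
- by move=> u Hu; rewrite hf //= => E; apply: Hu; case: E.
- by move=> E; apply: Hs; rewrite /= -E.
Qed.

Definition L1 (e : 'I_3 -> K) (g : series) : series :=
  fun w => if w is x :: u then e x * g u else 0.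
Definition L2 (c : 'I_3 -> 'I_3 -> K) (g : series) : series :=
  fun w => if w is x :: y :: u then c x y * g u else 0.
Definition L3 (c : 'I_3 -> 'I_3 -> 'I_3 -> K) (g : series) : series :=
  fun w => if w is x :: y :: z :: u then c x y z * g u else 0.

Definition dc1 (e : 'I_3 -> K) x y : K := if mg x y is Some k then e k else 0.
Definition dc2 (c : 'I_3 -> 'I_3 -> K) x y z : K :=
  (if mg x y is Some k then c k z else 0) - (if mg y z is Some k then c x k else 0).

Lemma D_L1 e g w : D (L1 e g) w = L2 (dc1 e) g w - L1 e (D g) w.
Proof.
case: w => [|x [|y v]]; rewrite ?D_nil ?D_1 /=; first by rewrite subr0.
  by rewrite D_nil mulr0 subr0.
rewrite D2 /mv /dc1 (@D_eq _ (fun u => e x * g u)) // D_scale.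
by case: mg => [k|] /=; ring.
Qed.

Lemma D_L2 c g w : D (L2 c g) w = L3 (dc2 c) g w + L2 c (D g) w.
Proof.
case: w => [|x [|y [|z v]]]; rewrite ?D_nil ?D_1 /=; first by rewrite addr0.
- by rewrite addr0.
- rewrite D2 D_1 /mv; case: mg => *; rewrite /= D_nil; ring.
rewrite D2 D2 /mv /dc2 (@D_eq (fun u => L2 c g (x :: y :: u)) (fun u => c x y * g u)) // D_scale.
by case: (mg x y) => [k|]; case: (mg y z) => [k'|] /=; ring.
Qed.

Definition zc (a b : 'I_3) : K :=
  match nat_of_ord a, nat_of_ord b with 0, 0 => 1 | 1, 2 => 1 | 2, 1 => 1 | _, _ => 0 end.
Definition e3 (a : 'I_3) : K := if nat_of_ord a is 2 then 1 else 0.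
Definition qc (a b : 'I_3) : K :=
  match nat_of_ord a, nat_of_ord b with 0, 1 => 1 | 1, 0 => 1 | _, _ => 0 end.

Lemma dc2_zc x y z : dc2 zc x y z = 0.
Proof.
rewrite /dc2 /mg /zc.
by case: x => -[|[|[|?]]] ? //=; case: y => -[|[|[|?]]] ? //=; case: z => -[|[|[|?]]] ? //=; rewrite ?subrr ?subr0.
Qed.

Lemma dc1_e3 x y : dc1 e3 x y = 0.
Proof. by rewrite /dc1 /mg; case: x => -[|[|[|?]]] ? //=; case: y => -[|[|[|?]]] ? //=. Qed.

Lemma comm_id x y z : e3 x * zc y z = zc x y * e3 z + dc2 qc x y z.
Proof.
rewrite /dc2 /mg /zc /e3 /qc.
by case: x => -[|[|[|?]]] ? //=; case: y => -[|[|[|?]]] ? //=; case: z => -[|[|[|?]]] ? //=; ring.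
Qed.


Lemma zA2E w : zA2 K w = L2 zc (sone K) w.
Proof.
rewrite /zA2 /sadd /y1 /y2 /y3 !smul_gen ?o2E ?o1E ?o0E.
case: w => [|x [|y [|t u]]] //=; rewrite ?eqseq_cons /= ?andbF ?addr0 //; last by rewrite /sone /= mulr0.
rewrite /zc /sone /=; case: x => -[|[|[|?]]] ? //=; case: y => -[|[|[|?]]] ? //=; rewrite ?mulr1 ?addr0 ?add0r.
all: by rewrite ?mulr1n ?mulr0n.
Qed.

Lemma zA2_homog : homog 2 (zA2 K).
Proof. by move=> w Hw; rewrite zA2E; case: w Hw => [|x [|y [|t u]]] //= _; rewrite /sone /= mulr0. Qed.

Lemma smul_z g w : smul (zA2 K) g w = L2 zc g w.
Proof.
rewrite (smul_homog _ _ zA2_homog); case: w => [|x [|y u]] //=.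
by rewrite zA2E /= /sone /= drop0 take0 mulr1.
Qed.

Lemma smul_y3 g w : smul (y3 K) g w = L1 e3 g w.
Proof.
rewrite (smul_homog _ _ (gen_homog _)); case: w => [|x u] //=.
rewrite take0 drop0 /gen ?o2E ?o1E ?o0E /e3; congr (_ * _).
by case: x => -[|[|[|?]]] ? //=.
Qed.

Definition Z j : series := iter j (L2 zc) (sone K).
Definition M n : series := if odd n then L1 e3 (Z n./2) else Z n./2.

Lemma L1_eq e g g' w : (forall u, g u = g' u) -> L1 e g w = L1 e g' w.
Proof. by move=> H; case: w => //= x u; rewrite H. Qed.
Lemma L2_eq c g g' w : (forall u, g u = g' u) -> L2 c g w = L2 c g' w.
Proof. by move=> H; case: w => [|x [|y u]] //=; rewrite H. Qed.
Lemma L3_eq c g g' w : (forall u, g u = g' u) -> L3 c g w = L3 c g' w.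
Proof. by move=> H; case: w => [|x [|y [|t u]]] //=; rewrite H. Qed.

Lemma spowE j w : spow (zA2 K) j w = Z j w.
Proof.
elim: j w => [|j IH] w //=.
by rewrite /spow /= smul_z; apply: L2_eq.
Qed.

Lemma monE n w : monA2 K n w = M n w.
Proof.
rewrite /monA2 /M; case: odd; last exact: spowE.
by rewrite smul_y3; apply: L1_eq => u; apply: spowE.
Qed.

Lemma homog_L1 m e g : homog m g -> homog m.+1 (L1 e g).
Proof. by move=> hg [|x u] //= Hu; rewrite hg ?mulr0 // => E; apply: Hu; rewrite E. Qed.
Lemma homog_L2 m c g : homog m g -> homog m.+2 (L2 c g).
Proof. by move=> hg [|x [|y u]] //= Hu; rewrite hg ?mulr0 // => E; apply: Hu; rewrite E. Qed.

Lemma sone_homog : homog 0 (sone K).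
Proof. by move=> [|x u]. Qed.

Lemma Z_homog j : homog j.*2 (Z j).
Proof. elim: j => [|j IH]; first exact: sone_homog. by rewrite doubleS; apply: homog_L2. Qed.

Lemma D_sone w : D (sone K) w = 0.
Proof. by apply: D_homog0; exact: sone_homog. Qed.

Lemma L3_c0 c g w : (forall x y z, c x y z = 0) -> L3 c g w = 0.
Proof. by move=> H; case: w => [|x [|y [|t u]]] //=; rewrite H mul0r. Qed.
Lemma L2_c0 c g w : (forall x y, c x y = 0) -> L2 c g w = 0.
Proof. by move=> H; case: w => [|x [|y u]] //=; rewrite H mul0r. Qed.
Lemma L2_g0 c g w : (forall u, g u = 0) -> L2 c g w = 0.
Proof. by move=> H; case: w => [|x [|y u]] //=; rewrite H mulr0. Qed.
Lemma L1_g0 e g w : (forall u, g u = 0) -> L1 e g w = 0.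
Proof. by move=> H; case: w => [|x u] //=; rewrite H mulr0. Qed.

Lemma Z_cocycle j w : D (Z j) w = 0.
Proof.
elim: j w => [|j IH] w; first exact: D_sone.
change (D (L2 zc (Z j)) w = 0).
by rewrite D_L2 L3_c0 ?L2_g0 ?addr0 // => *; apply: dc2_zc.
Qed.

Lemma M_homog n : homog n (M n).
Proof.
rewrite /M; have := odd_double_half n; case: odd => /= E.
  by rewrite -{1}E add1n; apply/homog_L1/Z_homog.
by rewrite -{1}E add0n; apply: Z_homog.
Qed.

Lemma M_cocycle n w : D (M n) w = 0.
Proof.
rewrite /M; case: odd; last exact: Z_cocycle.
rewrite D_L1 L2_c0 ?L1_g0 ?subr0 //; first exact: Z_cocycle.
exact: dc1_e3.
Qed.


Fixpoint alt (n : nat) (b : bool) : word :=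
  if n is n'.+1 then (if b then o2 else o1) :: alt n' (~~ b) else [::].

Lemma D_alt n b g : D g (alt n b) = 0.
Proof.
elim: n b g => [|n IH] b g; first by rewrite D_nil.
case: n IH => [|n] IH; first by rewrite D_1.
rewrite /= D2 /mv; case: b => /=; rewrite sub0r; apply/eqP; rewrite oppr_eq0; apply/eqP.
  exact: (IH false (fun u => g (o2 :: u))).
exact: (IH true (fun u => g (o1 :: u))).
Qed.

Lemma Z_alt j b : Z j (alt j.*2 b) = 1.
Proof.
elim: j b => [|j IH] b; first by rewrite /Z /= /sone /=.
rewrite doubleS /=; change (zc (if b then o2 else o1) (if ~~ b then o2 else o1) * Z j (alt j.*2 (~~ ~~ b)) = 1).
by rewrite IH; case: b; rewrite /zc /= mulr1.
Qed.

Lemma M_alt n : M n (alt n true) = 1.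
Proof.
rewrite -[in alt n _](odd_double_half n) /M; case: odd.
  by rewrite add1n /= Z_alt /e3 /= mulr1.
by rewrite add0n Z_alt.
Qed.

Lemma not_cob n : ~ coboundary n (monA2 K n).
Proof.
move=> [g [_ H]]; move: (H (alt n true)); rewrite monE M_alt derE D_alt.
by move/eqP; rewrite oner_eq0.
Qed.

Lemma ord3P (a : 'I_3) : a = o0 \/ a = o1 \/ a = o2.
Proof. by case: a => -[|[|[|?]]] H; [left|right;left|right;right|]; try apply/val_inj. Qed.

Definition hh (f : series) : series := fun w =>
  if w is x :: u then
    (match nat_of_ord x with 0 => f (o2 :: o2 :: u) | 1 => f (o2 :: o0 :: u) | _ => 0 end)
  else 0.
Definition PP (f : series) : series := fun u => f (o2 :: o1 :: u).

Lemma key f a b r : f (a :: b :: r) = L2 zc (PP f) (a :: b :: r) + D (hh f) (a :: b :: r) + hh (D f) (a :: b :: r).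
Proof.
case: (ord3P a) => [->|[->|->]]; case: (ord3P b) => [->|[->|->]]; rewrite /= !D2 /= /mv /mg /zc /PP /= ?D0.
all: ring.
Qed.

Lemma PP_D f u : D f (o2 :: o1 :: u) = D (PP f) u.
Proof.
rewrite D2 /mv /=; case: u => [|x u]; first by rewrite D_1 D_nil subr0.
rewrite D2 /mv /=; case: (ord3P x) => [->|[->|->]] /=; rewrite /PP; ring.
Qed.

Lemma hh_homog (m : nat) (f : series) : homog m.+2 f -> homog m.+1 (hh f).
Proof.
move=> hf [|x u] //= Hu; case: (nat_of_ord x) => [|[|?]] //; rewrite hf //= => E; apply: Hu;
  by rewrite /= (succn_inj (succn_inj E)).
Qed.

Lemma PP_homog m f : homog m.+2 f -> homog m (PP f).
Proof. by move=> hf u Hu; rewrite /PP hf //= => E; apply: Hu; apply: succn_inj; apply: succn_inj. Qed.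

Lemma hh_0 g w : (forall u, g u = 0) -> hh g w = 0.
Proof. by move=> H; case: w => [|x u] //=; case: (nat_of_ord x) => [|[|?]]. Qed.

Lemma y3E w : y3 K w = L1 e3 (sone K) w.
Proof.
rewrite /y3 /gen ?o2E; case: w => [|x [|y u]] //=.
  by rewrite /sone /= mulr1 /e3; case: (ord3P x) => [->|[->|->]] /=.
by rewrite eqseq_cons andbF /sone /= mulr0.
Qed.

Lemma comm_L g w : L1 e3 (L2 zc g) w = L2 zc (L1 e3 g) w + L3 (dc2 qc) g w.
Proof.
case: w => [|x [|y [|z u]]] /=; try ring.
by rewrite mulrA comm_id; ring.
Qed.

Definition Rm m : series := if odd m then L2 qc (Z m./2) else (fun _ => 0).

Lemma Rm_homog m : homog m.+1 (Rm m).
Proof.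
rewrite /Rm; have := odd_double_half m; case: odd => /= E; last by [].
by rewrite -{1}E add1n; apply/homog_L2/Z_homog.
Qed.

Lemma Mstep m w : M m.+2 w = L2 zc (M m) w + D (Rm m) w.
Proof.
rewrite /M /Rm /= negbK; case: odd.
  rewrite D_L2 (@L2_g0 qc (D (Z _)) w (Z_cocycle _)) addr0.
  exact: comm_L.
by rewrite D0 addr0.
Qed.

Definition Q n := forall f : series, homog n f -> (forall w, D f w = 0) ->
  exists c : K, exists g : series, homog n.-1 g /\ forall w, f w - c * M n w = D g w.

Lemma Q0 : Q 0.
Proof.
move=> f hf _; exists (f [::]), (fun _ => 0); split => // w.
rewrite D0 /M /= /Z /= /sone; case: w => [|x u] /=; first by rewrite mulr1 subrr.
by rewrite hf // mulr0 subr0.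
Qed.

Lemma Q1 : Q 1.
Proof.
move=> f hf hD; exists (f [:: o2]), (fun _ => 0); split => // w.
rewrite D0 /M /= /Z /=.
case: w => [|x [|y u]] /=; first by rewrite hf // mulr0 subr0.
  have h0 := hD [:: o2; o2]; rewrite D2 D_1 /mv /= subr0 in h0.
  have h1 := hD [:: o0; o2]; rewrite D2 D_1 /mv /= subr0 in h1.
  by rewrite /sone /= mulr1 /e3; case: (ord3P x) => [->|[->|->]] /=; rewrite ?h0 ?h1; ring.
by rewrite hf // /sone /= !mulr0 subr0.
Qed.

Lemma Qstep m : Q m -> Q m.+2.
Proof.
move=> IH f hf hD.
have hP := PP_homog hf.
have hPD : forall u, D (PP f) u = 0 by move=> u; rewrite -PP_D hD.
case: (IH _ hP hPD) => c [g [hg Hg]].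
pose g' : series := if m is 0 then (fun _ => 0) else g.
have hg'D : forall u, D g' u = D g u.
  by rewrite /g'; case: (m) hg => [|m'] hg u //; rewrite D0 D_homog0.
have hg' : homog m.+1 (L2 zc g').
  rewrite /g'; case: (m) hg => [|m'] hg; last exact: homog_L2.
  by move=> w _; rewrite L2_g0.
exists c, (fun u => 1 * L2 zc g' u + 1 * hh f u + (- c) * Rm m u); split.
  move=> w /= Hw; rewrite hg' // (hh_homog hf) // (Rm_homog (m:=m)) //; ring.
move=> w; rewrite D_comb.
have Ef : f w = L2 zc (PP f) w + D (hh f) w.
  case: w => [|a [|b r]].
  - by rewrite hf // D_nil /=; ring.
  - by rewrite hf // D_1 /=; ring.
  by rewrite {1}(key f a b r) (@hh_0 (D f)) ?addr0.
have EP : L2 zc (PP f) w = c * L2 zc (M m) w + L2 zc (D g') w.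
  case: w {Ef} => [|x [|y u]] /=; try ring.
  by rewrite hg'D -Hg /PP; ring.
rewrite Ef EP Mstep D_L2 L3_c0; last exact: dc2_zc.
ring.
Qed.

Lemma Qall n : Q n.
Proof.
suff H : forall j, Q j.*2 /\ Q j.*2.+1.
  by rewrite -(odd_double_half n); case: odd; rewrite ?add1n ?add0n; case: (H n./2).
elim=> [|j [IH1 IH2]]; first by split; [exact: Q0|exact: Q1].
by rewrite doubleS; split; apply: Qstep.
Qed.

End Work.

Unset Implicit Arguments.
Set Strict Implicit.

Theorem proposition3p1 (K : closedFieldType) (char0 : [pchar K] =i pred0) :
  cocycle 1 (y3 K) /\ cocycle 2 (zA2 K) /\
  cohomologous 2 (smul (y3 K) (y3 K)) (szero K) /\
  cohomologous 3 (smul (y3 K) (zA2 K)) (smul (zA2 K) (y3 K)) /\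
  (forall n : nat,
     cocycle n (monA2 K n) /\ ~ coboundary n (monA2 K n) /\
     forall f : series K, cocycle n f ->
       exists c : K, cohomologous n f (sscale c (monA2 K n))).
Proof.
split.
  split; first exact: gen_homog.
  move=> w; rewrite derE (@D_eq _ _ (M K 1)); first exact: M_cocycle.
  exact: y3E.
split.
  split; first exact: zA2_homog.
  move=> w; rewrite derE (@D_eq _ _ (M K 2)); first exact: M_cocycle.
  exact: zA2E.
split.
  exists (y1 K); split; first exact: gen_homog.
  move=> w; rewrite /ssub /szero subr0 derE smul_gen.
  case: w => [|a [|b [|c u]]]; rewrite ?D_nil ?D_1 //.
  - by rewrite eqseq_cons andbF.
  - rewrite D2 D_1 subr0 /mv /y1 /gen ?o2E ?o0E.
    by case: (ord3P a) => [->|[->|->]]; case: (ord3P b) => [->|[->|->]] /=.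
  have -> : ([:: a, b, c & u] == [:: 2; 2]) = false by apply/eqP; case.
  by rewrite (@D_homog _ 1 (y1 K)) //; exact: gen_homog.
split.
  exists (L2 (qc K) (sone K)); split; first exact/homog_L2/sone_homog.
  move=> w; rewrite /ssub derE D_L2 (@L2_g0 _ _ _ _ (@D_sone K)) addr0 smul_y3 smul_z.
  rewrite (@L1_eq _ _ _ (L2 (zc K) (sone K))); last exact: zA2E.
  rewrite (@L2_eq _ _ _ (L1 (e3 K) (sone K))); last exact: y3E.
  by rewrite comm_L; ring.
move=> n; split.
  split; first by move=> w Hw; rewrite monE M_homog.
  by move=> w; rewrite derE (@D_eq _ _ (M K n)) ?M_cocycle // => u; rewrite monE.
split; first exact: not_cob.
move=> f [hf hD].
have hD' : forall w, D f w = 0 by move=> w; rewrite -derE.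
case: (Qall hf hD') => c [g [hg Hg]].
exists c, g; split => // w.
by rewrite /ssub /sscale monE derE Hg.
Qed.
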